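(* Let $G\subset U(V)$ be a finite pseudo reflection group and $\Upsilon$ any admissible parameter set. Then $B_G(\Upsilon)$ is a finite-dimensional $\mathbb C$-algebra, and the linear map $\mathbb CG\to B_G(\Upsilon)$, $w\mapsto T_w$, is an injective algebra homomorphism.
   Context: Let $V$ be a finite-dimensional complex vector space and $G\subset U(V)$ a finite pseudo reflection group (a finite group generated by pseudo reflections, i.e. elements conjugate in $GL(V)$ to $\mathrm{diag}(\xi,1,\dots,1)$ with $\xi\neq1$ a root of unity). Let $R$ be the set of pseudo reflections in $G$ and $\mathcal A=\{H_i\}_{i\in P}$ the set of their reflecting hyperplanes, indexed by a finite set $P$. For $s\in R$ let $i(s)$ be the index with $H_{i(s)}$ the hyperplane fixed pointwise by $s$. $G$ permutes $\mathcal A$; write $w(i)$ for the index with $H_{w(i)}=w(H_i)$ and $i\sim j$ if $j=w(i)$ for some $w\in G$. Put $R(i,j)=\{s\in R: s(H_j)=H_i\}$. For $i\in P$ let $G_i$ be the pointwise stabilizer of $H_i$ in $G$ and $s_i\in G_i$ its unique element with exceptional eigenvalue $e^{2\pi\sqrt{-1}/|G_i|}$. An edge is an intersection of hyperplanes of $\mathcal A$. For $i\ne j$ write $H_i\pitchfork H_j$ if $\{k\in P: H_i\cap H_j\subset H_k\}=\{i,j\}$; a codimension-2 edge $L$ is crossing if $L=H_i\cap H_j$ for some $i,j$ with $H_i\pitchfork H_j$, and noncrossing otherwise. For $w\in G$, $V_w=\{v\in V: wv=v\}$. Admissible parameters $\Upsilon=\{\mu_s,\tau_i\}_{s\in R,i\in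 P}$: $\mu_s\in\mathbb C\setminus\{0\}$ with $\mu_s=\mu_{s'}$ whenever $s,s'$ are conjugate in $G$, and $\tau_i\in\mathbb C$ with $\tau_i=\tau_j$ whenever $i\sim j$. The algebra $B_G(\Upsilon)$ is the unital associative $\mathbb C$-algebra generated by $\{T_w\}_{w\in G}\cup\{e_i\}_{i\in P}$ with $T_1=1$ and relations: (0) $T_{w_1}T_{w_2}=T_{w_1w_2}$; (1) $T_{s_i}e_i=e_iT_{s_i}=e_i$ for $i\in P$; (1') $T_we_i=e_iT_w=e_i$ whenever $w(H_i)=H_i$ and $H_i\cap V_w$ is a noncrossing codimension-2 edge; (2) $e_i^2=\tau_ie_i$; (3) $T_we_j=e_iT_w$ whenever $w(H_j)=H_i$; (4) $e_ie_j=e_je_i$ if $H_i\pitchfork H_j$; (5) $e_ie_j=(\sum_{s\in R(i,j)}\mu_sT_s)e_j=e_i(\sum_{s\in R(i,j)}\mu_sT_s)$ if $i\ne j$, $H_i\cap H_j$ is noncrossing and $R(i,j)\neq\emptyset$; (6) $e_ie_j=0$ if $i\ne j$, $H_i\cap H_j$ is noncrossing and $R(i,j)=\emptyset$. *)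

(* Defs.v *)
From HB Require Import structures.
From mathcomp Require Import all_boot all_order all_algebra all_fingroup all_character.
Set Implicit Arguments. Unset Strict Implicit. Unset Printing Implicit Defensive.
Import GRing.Theory Num.Theory.
Local Open Scope ring_scope.

(* Linear algebra on V = C^n.  Vectors are identified with ROW vectors and   *)
(* subspaces of V are row spaces of square matrices (mxalgebra, %MS).        *)
(* A matrix A acts on V as the linear map v |-> A v (column convention),     *)
(* i.e. on row vectors as u |-> u *m A^T; so A ↦ (this map) is a group       *)
(* homomorphism (left action), as for G ⊂ GL(V) in the paper.               *)

Definition is_root_of_unity {C : numClosedFieldType} (x : C) : Prop :=
  exists k : nat, (0 < k)%N /\ x ^+ k = 1.

Definition pseudo_refl {C : numClosedFieldType} {n : nat} (A : 'M[C]_n) : Prop :=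
  exists (Pm : 'M[C]_n) (xi : C) (i0 : 'I_n),
    [/\ Pm \in unitmx, xi != 1, is_root_of_unity xi &
        invmx Pm *m A *m Pm = diag_mx (\row_i (if i == i0 then xi else 1))].

Definition unitary {C : numClosedFieldType} {n : nat} (A : 'M[C]_n) : Prop :=
  A *m (map_mx Num.conj A)^T = 1%:M.

Definition mx_act {C : numClosedFieldType} {n : nat} (A U : 'M[C]_n) : 'M[C]_n :=
  U *m A^T.

Definition fixsp {C : numClosedFieldType} {n : nat} (A : 'M[C]_n) : 'M[C]_n :=
  kermx (A^T - 1%:M).

(* e^{2 pi sqrt(-1) / m} ;  m.-root (-1) = e^{pi sqrt(-1)/m}                *)
Definition zeta_root {C : numClosedFieldType} (m : nat) : C :=
  (m.-root (-1)) ^+ 2.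

Section Arrangement.
Variables (C : numClosedFieldType) (n : nat) (P : finType) (H : P -> 'M[C]_n).

Definition cap2 (i j : P) : 'M[C]_n := (H i :&: H j)%MS.

Definition pitchfork (i j : P) : bool :=
  (i != j) && ([set k | (cap2 i j <= H k)%MS] == [set i; j]).

Definition is_edge (L : 'M[C]_n) : bool :=
  [exists S : {set P}, (L == \bigcap_(k in S) H k)%MS].

Definition codim2 (L : 'M[C]_n) : bool := (\rank L + 2 == n)%N.

Definition crossing_edge (L : 'M[C]_n) : bool :=
  [exists i, exists j, pitchfork i j && (L == cap2 i j)%MS].

Definition noncrossing2 (L : 'M[C]_n) : bool :=
  [&& is_edge L, codim2 L & ~~ crossing_edge L].

End Arrangement.

(* Formal noncommutative polynomials over C in the generators X:           *)
(* finite formal linear combinations of words.                              *)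
Section FreeAlg.
Variables (C : numClosedFieldType) (X : eqType).

Definition lincomb := seq (C * seq X).

Definition lc_coef (f : lincomb) (u : seq X) : C :=
  \sum_(p <- f) (if p.2 == u then p.1 else 0).

Definition lc_add (f g : lincomb) : lincomb := f ++ g.
Definition lc_scale (c : C) (f : lincomb) : lincomb :=
  [seq (c * p.1, p.2) | p <- f].
Definition lc_sub (f g : lincomb) : lincomb := f ++ lc_scale (-1) g.
Definition lc_mul (f g : lincomb) : lincomb :=
  [seq (p.1 * q.1, p.2 ++ q.2) | p <- f, q <- g].
Definition lc_word (u : seq X) : lincomb := [:: (1, u)].
Definition lc_one : lincomb := lc_word [::].
Definition lc_zero : lincomb := [::].

Definition in_ideal (rel : lincomb -> Prop) (f : lincomb) : Prop :=
  exists (m : nat) (c : 'I_m -> C) (u v : 'I_m -> seq X) (r : 'I_m -> lincomb),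
    (forall k, rel (r k)) /\
    forall x : seq X,
      lc_coef f x =
      \sum_(k < m) c k * lc_coef (lc_mul (lc_word (u k)) (lc_mul (r k) (lc_word (v k)))) x.

End FreeAlg.

(* Generators: inl w = T_w (w in G), inr i = e_i (i in P).                  *)
Section BMWRel.
Variables (C : numClosedFieldType) (n : nat) (gT : finGroupType)
  (rho : gT -> 'M[C]_n) (P : finType) (H : P -> 'M[C]_n)
  (Rs : {set gT}) (mu : gT -> C) (tau : P -> C).

Local Notation X := (gT + P)%type.
Local Notation lc := (lincomb C X).

Definition genT (w : gT) : lc := lc_word C [:: inl w].
Definition gene (i : P) : lc := lc_word C [:: inr i].

Definition maps_hyp (w : gT) (j i : P) : bool := (mx_act (rho w) (H j) == H i)%MS.

Definition hyp_equiv (i j : P) : Prop := exists w, maps_hyp w i j.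

Definition Gpt (i : P) : {set gT} := [set w | (H i <= fixsp (rho w))%MS].

Definition is_s (i : P) (s : gT) : bool :=
  [&& s \in Gpt i, s != 1%g & eigenvalue (rho s) (zeta_root #|Gpt i|)].

Definition Rij (i j : P) : {set gT} := [set s in Rs | maps_hyp s j i].

Definition sumR (i j : P) : lc :=
  flatten [seq lc_scale (mu s) (genT s) | s <- enum (Rij i j)].

Definition B_rel (r : lc) : Prop :=
  r = lc_sub (genT 1%g) (lc_one C X)
  \/ (exists w1 w2, r = lc_sub (lc_mul (genT w1) (genT w2)) (genT (w1 * w2)%g))
  \/ (exists i s, is_s i s /\
        (r = lc_sub (lc_mul (genT s) (gene i)) (gene i)
         \/ r = lc_sub (lc_mul (gene i) (genT s)) (gene i)))
  \/ (exists i w, maps_hyp w i i /\ noncrossing2 H (H i :&: fixsp (rho w))%MS /\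
        (r = lc_sub (lc_mul (genT w) (gene i)) (gene i)
         \/ r = lc_sub (lc_mul (gene i) (genT w)) (gene i)))
  \/ (exists i, r = lc_sub (lc_mul (gene i) (gene i)) (lc_scale (tau i) (gene i)))
  \/ (exists w i j, maps_hyp w j i /\
        r = lc_sub (lc_mul (genT w) (gene j)) (lc_mul (gene i) (genT w)))
  \/ (exists i j, pitchfork H i j /\
        r = lc_sub (lc_mul (gene i) (gene j)) (lc_mul (gene j) (gene i)))
  \/ (exists i j, [/\ i != j, noncrossing2 H (cap2 H i j) & Rij i j != set0] /\
        (r = lc_sub (lc_mul (gene i) (gene j)) (lc_mul (sumR i j) (gene j))
         \/ r = lc_sub (lc_mul (gene i) (gene j)) (lc_mul (gene i) (sumR i j))))
  \/ (exists i j, [/\ i != j, noncrossing2 H (cap2 H i j) & Rij i j == set0] /\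
        r = lc_mul (gene i) (gene j)).

Definition B_ideal (f : lc) : Prop := in_ideal B_rel f.

(* B_G(Upsilon) = free algebra / B_ideal is finite-dimensional:            *)
(* finitely many words span the quotient.                                   *)
Definition B_findim : Prop :=
  exists (m : nat) (b : 'I_m -> seq X),
    forall x : seq X, exists c : 'I_m -> C,
      B_ideal (lc_sub (lc_word C x) [seq (c k, b k) | k <- enum 'I_m]).

(* the image of sum_w a_w w under CG -> B_G, w |-> T_w (before quotient) *)
Definition T_image (a : gT -> C) : lc := [seq (a w, [:: inl w]) | w <- enum gT].

End BMWRel.

(* Main.v *)
Require Import Defs.
From HB Require Import structures.
From mathcomp Require Import all_boot all_order all_algebra all_fingroup all_character.
From mathcomp Require Import zify.
Set Implicit Arguments. Unset Strict Implicit. Unset Printing Implicit Defensive.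
Import GRing.Theory Num.Theory.
Local Open Scope ring_scope.

Section Gen.
Variables (C : numClosedFieldType) (X : eqType).
Local Notation lc := (lincomb C X).

Definition Lf (F : seq X -> C) (f : lc) : C := \sum_(p <- f) p.1 * F p.2.

Lemma Lf_cat F f g : Lf F (f ++ g) = Lf F f + Lf F g.
Proof. by rewrite /Lf big_cat. Qed.

Lemma Lf_scale F c f : Lf F (lc_scale c f) = c * Lf F f.
Proof. by rewrite /Lf /lc_scale big_map mulr_sumr; apply: eq_bigr => p _ /=; rewrite mulrA. Qed.

Lemma Lf_sub F f g : Lf F (lc_sub f g) = Lf F f - Lf F g.
Proof. by rewrite /lc_sub Lf_cat Lf_scale mulN1r. Qed.

Lemma Lf_nil F : Lf F [::] = 0.
Proof. by rewrite /Lf big_nil. Qed.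

Lemma Lf_cons F p f : Lf F (p :: f) = p.1 * F p.2 + Lf F f.
Proof. by rewrite /Lf big_cons. Qed.

Lemma Lf_word F x : Lf F (lc_word C x) = F x.
Proof. by rewrite /lc_word Lf_cons Lf_nil addr0 mul1r. Qed.

Lemma Lf_mul F f g :
  Lf F (lc_mul f g) = \sum_(p <- f) p.1 * Lf (fun x => F (p.2 ++ x)) g.
Proof.
rewrite /Lf /lc_mul big_allpairs_dep /=; apply: eq_bigr => p _.
by rewrite mulr_sumr; apply: eq_bigr => q _; rewrite mulrA.
Qed.

Lemma Lf_wordl F a g : Lf F (lc_mul (lc_word C a) g) = Lf (fun x => F (a ++ x)) g.
Proof. by rewrite Lf_mul /lc_word big_cons big_nil addr0 mul1r. Qed.

Lemma Lf_wordr F b g : Lf F (lc_mul g (lc_word C b)) = Lf (fun x => F (x ++ b)) g.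
Proof.
rewrite Lf_mul /Lf; apply: eq_bigr => p _.
by rewrite /lc_word big_cons big_nil addr0 /= mul1r.
Qed.

Definition sand (a : seq X) (r : lc) (b : seq X) : lc :=
  lc_mul (lc_word C a) (lc_mul r (lc_word C b)).

Lemma Lf_sand F a r b : Lf F (sand a r b) = Lf (fun x => F (a ++ x ++ b)) r.
Proof. by rewrite /sand Lf_wordl Lf_wordr. Qed.

Lemma Lf_ext F G f : (forall x, F x = G x) -> Lf F f = Lf G f.
Proof. by move=> e; apply: eq_bigr => p _; rewrite e. Qed.

Lemma Lf_ind f x : Lf (fun y => (y == x)%:R) f = lc_coef f x.
Proof.
rewrite /Lf /lc_coef; apply: eq_bigr => p _.
by case: eqP => _; rewrite ?mulr1 ?mulr0.
Qed.

Lemma LfS F f (S : seq (seq X)) : uniq S -> (forall p, p \in f -> p.2 \in S) ->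
  Lf F f = \sum_(x <- S) lc_coef f x * F x.
Proof.
move=> uS fS; rewrite /lc_coef.
under eq_bigr => x _ do rewrite mulr_suml.
rewrite exchange_big /Lf big_seq [RHS]big_seq; apply: eq_bigr => p pf.
rewrite (bigD1_seq p.2) ?fS //= eqxx big1 ?addr0 // => x /negPf.
by rewrite eq_sym => ->; rewrite mul0r.
Qed.

Lemma coef_Lf m (c : 'I_m -> C) (h : 'I_m -> lc) f :
  (forall x, lc_coef f x = \sum_(k < m) c k * lc_coef (h k) x) ->
  forall F, Lf F f = \sum_(k < m) c k * Lf F (h k).
Proof.
move=> e F.
set S := undup (map snd f ++ flatten [seq map snd (h k) | k <- enum 'I_m]).
have uS : uniq S by apply: undup_uniq.
rewrite (LfS F uS); last first.
  by move=> p pf; rewrite mem_undup mem_cat map_f.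
under eq_bigr => x _ do rewrite e mulr_suml.
rewrite exchange_big; apply: eq_bigr => k _.
rewrite (LfS F uS (f := h k)); last first.
  move=> p pf; rewrite mem_undup mem_cat; apply/orP; right.
  apply/flattenP; exists (map snd (h k)); last by rewrite map_f.
  by apply: map_f; rewrite mem_enum.
by rewrite mulr_sumr; apply: eq_bigr => x _; rewrite mulrA.
Qed.

Variables (rel : lc -> Prop) (r0 : lc) (Hr0 : rel r0).

Definition Term := (C * seq X * seq X * {r : lc | rel r})%type.
Definition tval (t : Term) : lc := sand t.1.1.2 (sval t.2) t.1.2.

Definition I (f : lc) : Prop :=
  exists l : seq Term, forall F, Lf F f = \sum_(t <- l) t.1.1.1 * Lf F (tval t).

Lemma in_idealI f : in_ideal rel f -> I f.
Proof.
case=> m [c [u [v [r [Hr e]]]]].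
exists [seq (c k, u k, v k, exist _ (r k) (Hr k)) | k <- enum 'I_m] => F.
rewrite big_map big_enum /=.
by rewrite (coef_Lf (h := fun k => sand (u k) (r k) (v k)) e).
Qed.

Lemma I_in_ideal f : I f -> in_ideal rel f.
Proof.
case=> l e.
pose d : Term := (0, [::], [::], exist _ r0 Hr0).
exists (size l), (fun k => (nth d l k).1.1.1), (fun k => (nth d l k).1.1.2),
  (fun k => (nth d l k).1.2), (fun k => sval (nth d l k).2).
split=> [k|x]; first by case: (nth d l k).2.
rewrite -Lf_ind e (big_nth d) big_mkord; apply: eq_bigr => k _.
by rewrite Lf_ind.
Qed.

Lemma I_ext f g : (forall F, Lf F f = Lf F g) -> I g -> I f.
Proof. by move=> e [l H]; exists l => F; rewrite e H. Qed.

Lemma I_rel r : rel r -> I r.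
Proof.
move=> Hr; exists [:: (1, [::], [::], exist _ r Hr)] => F.
rewrite big_cons big_nil addr0 mul1r /tval /= Lf_sand.
by apply: Lf_ext => x; rewrite cats0.
Qed.

Lemma I_nil : I [::].
Proof. by exists [::] => F; rewrite Lf_nil big_nil. Qed.

Lemma I_cat f g : I f -> I g -> I (f ++ g).
Proof.
by case=> l1 e1 [l2 e2]; exists (l1 ++ l2) => F; rewrite Lf_cat big_cat e1 e2.
Qed.

Lemma I_scale c f : I f -> I (lc_scale c f).
Proof.
case=> l e; exists [seq (c * t.1.1.1, t.1.1.2, t.1.2, t.2) | t <- l] => F.
rewrite Lf_scale e big_map mulr_sumr; apply: eq_bigr => t _.
by rewrite mulrA.
Qed.

Lemma I_wordl a f : I f -> I (lc_mul (lc_word C a) f).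
Proof.
case=> l e; exists [seq (t.1.1.1, a ++ t.1.1.2, t.1.2, t.2) | t <- l] => F.
rewrite Lf_wordl e big_map; apply: eq_bigr => t _.
by rewrite /tval /= !Lf_sand; congr (_ * _); apply: Lf_ext => x; rewrite catA.
Qed.

Lemma I_wordr b f : I f -> I (lc_mul f (lc_word C b)).
Proof.
case=> l e; exists [seq (t.1.1.1, t.1.1.2, t.1.2 ++ b, t.2) | t <- l] => F.
rewrite Lf_wordr e big_map; apply: eq_bigr => t _.
by rewrite /tval /= !Lf_sand; congr (_ * _); apply: Lf_ext => x; rewrite -!catA.
Qed.

Lemma I_sand a r b : rel r -> I (sand a r b).
Proof. by move=> Hr; apply/I_wordl/I_wordr/I_rel. Qed.

Definition Eqv f g := I (lc_sub f g).

Lemma Eqv_ext f g : (forall F, Lf F f = Lf F g) -> Eqv f g.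
Proof.
move=> e; apply: (I_ext _ I_nil) => F; by rewrite Lf_sub e subrr Lf_nil.
Qed.

Lemma Eqv_trans f g h : Eqv f g -> Eqv g h -> Eqv f h.
Proof.
move=> H1 H2; apply: (I_ext _ (I_cat H1 H2)) => F.
by rewrite Lf_cat !Lf_sub addrA subrK.
Qed.

Lemma Eqv_sym f g : Eqv f g -> Eqv g f.
Proof.
move=> H1; apply: (I_ext _ (I_scale (-1) H1)) => F.
by rewrite Lf_scale !Lf_sub mulN1r opprB.
Qed.

Lemma Eqv_refl f : Eqv f f.
Proof. exact: Eqv_ext. Qed.

Lemma Eqv_cat f1 f2 g1 g2 : Eqv f1 g1 -> Eqv f2 g2 -> Eqv (f1 ++ f2) (g1 ++ g2).
Proof.
move=> H1 H2; apply: (I_ext _ (I_cat H1 H2)) => F.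
rewrite (Lf_sub F (f1 ++ f2)) (Lf_cat F (lc_sub f1 g1)) !Lf_sub !Lf_cat opprD addrACA. done.
Qed.

Lemma Eqv_scale c f g : Eqv f g -> Eqv (lc_scale c f) (lc_scale c g).
Proof.
move=> H1; apply: (I_ext _ (I_scale c H1)) => F.
by rewrite !Lf_scale !Lf_sub !Lf_scale mulrBr.
Qed.

Lemma Eqv_rel f g a r b : rel r ->
  (forall F, Lf F f - Lf F g = Lf (fun x => F (a ++ x ++ b)) r) -> Eqv f g.
Proof.
move=> Hr e; apply: (I_ext _ (I_sand a b Hr)) => F.
by rewrite Lf_sub e Lf_sand.
Qed.

Lemma Eqv_wordr b f g : Eqv f g -> Eqv (lc_mul f (lc_word C b)) (lc_mul g (lc_word C b)).
Proof.
move=> H1; apply: (I_ext _ (I_wordr b H1)) => F.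
by rewrite Lf_wordr !Lf_sub !Lf_wordr.
Qed.

Lemma Lf_flatten (T : Type) F (h : T -> lc) (l : seq T) :
  Lf F (flatten (map h l)) = \sum_(s <- l) Lf F (h s).
Proof.
elim: l => [|s l IH] /=; first by rewrite Lf_nil big_nil.
by rewrite Lf_cat IH big_cons.
Qed.

End Gen.

Section Mx.
Variables (C : numClosedFieldType) (n : nat).
Implicit Types A B : 'M[C]_n.

Lemma invmxM' A B : A \in unitmx -> B \in unitmx ->
  invmx (A *m B) = invmx B *m invmx A.
Proof.
move=> uA uB; have uAB : A *m B \in unitmx by rewrite unitmx_mul uA.
have e : A *m B *m (invmx B *m invmx A) = 1%:M.
  by rewrite mulmxA mulmxK // mulmxV.
by rewrite -[invmx (A *m B)]mulmx1 -e mulKmx.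
Qed.

Lemma fixspS A B : B \in unitmx ->
  (fixsp A *m B^T <= fixsp (B *m A *m invmx B))%MS.
Proof.
move=> uB; apply/sub_kermxP.
have hK : fixsp A *m (A^T - 1%:M) = 0 by rewrite mulmx_ker.
have e1 : B^T *m (invmx B)^T = 1%:M by rewrite -trmx_mul mulVmx // trmx1.
rewrite !trmx_mul mulmxBr mulmx1 !mulmxA -[fixsp A *m B^T *m _]mulmxA e1 mulmx1.
by rewrite -mulmxBl -{2}[fixsp A]mulmx1 -mulmxBr hK mul0mx.
Qed.

Lemma fixsp_conj A B : B \in unitmx ->
  (fixsp (B *m A *m invmx B) == fixsp A *m B^T)%MS.
Proof.
move=> uB; apply/andP; split; last exact: fixspS.
have uB' : invmx B \in unitmx by rewrite unitmx_inv.
have := fixspS (B *m A *m invmx B) uB'.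
rewrite invmxK !mulmxA mulVmx // mul1mx mulmxKV // => /(submxMr B^T).
by rewrite -[_ *m (invmx B)^T *m B^T]mulmxA -trmx_mul mulmxV // trmx1 mulmx1.
Qed.

Lemma pseudo_refl_conj A B : B \in unitmx -> pseudo_refl A ->
  pseudo_refl (B *m A *m invmx B).
Proof.
move=> uB [Pm [xi [i0 [uP xi1 xir e]]]].
exists (B *m Pm), xi, i0; split=> //; first by rewrite unitmx_mul uB.
by rewrite invmxM' // !mulmxA mulmxKV // mulmxKV.
Qed.

Lemma rank_conj A B : B \in unitmx -> \rank (B *m A *m invmx B) = \rank A.
Proof.
move=> uB; rewrite mxrankMfree ?row_free_unit ?unitmx_inv //.
apply/eqP; rewrite eqn_leq mxrankM_maxr /=.
by rewrite -{1}[A](mulKmx uB) mxrankM_maxr.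
Qed.

Lemma rank_fixsp A : pseudo_refl A -> (0 < n)%N /\ \rank (fixsp A) = n.-1.
Proof.
move=> [Pm [xi [i0 [uP xi1 xir e]]]].
split; first exact: (leq_ltn_trans (leq0n _) (ltn_ord i0)).
rewrite /fixsp mxrank_ker.
have -> : A^T - 1%:M = (A - 1%:M)^T by rewrite raddfB /= trmx1.
rewrite mxrank_tr.
have eA : A = Pm *m (invmx Pm *m A *m Pm) *m invmx Pm.
  by rewrite !mulmxA mulmxV // mul1mx mulmxK.
have -> : A - 1%:M = Pm *m (invmx Pm *m A *m Pm - 1%:M) *m invmx Pm.
  by rewrite mulmxBr mulmxBl mulmx1 mulmxV // -eA.
rewrite rank_conj // e.
have -> : diag_mx (\row_i (if i == i0 then xi else 1)) - 1%:M =
          (xi - 1) *: (delta_mx i0 i0 : 'M[C]_n).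
  apply/matrixP => i j; rewrite !mxE.
  case: (eqVneq i j) => [<-|ij] /=; last first.
    rewrite mulr0n subr0; have [ei|hi] := eqVneq i i0; have [ej|hj] := eqVneq j i0;
      rewrite /= ?mulr0 //; by rewrite ei ej eqxx in ij.
  rewrite andbb mulr1n; case: (eqVneq i i0) => _ /=; first by rewrite mulr1.
  by rewrite subrr mulr0.
by rewrite mxrank_scale_nz ?mxrank_delta ?subr_eq0 // subn1.
Qed.

End Mx.

Section Main.
Variables (C : numClosedFieldType) (n : nat) (gT : finGroupType)
  (rho : mx_representation C [set: gT] n) (Rs : {set gT})
  (P : finType) (H : P -> 'M[C]_n) (mu : gT -> C) (tau : P -> C).

Local Notation X := (gT + P)%type.
Local Notation lc := (lincomb C X).
Local Notation rel := (B_rel rho H Rs mu tau).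

Lemma rel0 : rel (lc_sub (genT C P 1%g) (lc_one C X)).
Proof. by left. Qed.

Local Notation I := (I rel).
Local Notation Eqv := (Eqv rel).

Fixpoint ev (x : seq X) : option gT :=
  match x with
  | [::] => Some 1%g
  | inl w :: y => omap (fun c => w * c)%g (ev y)
  | inr _ :: _ => None
  end.

Lemma ev_cat x y : ev (x ++ y) = obind (fun a => omap (fun c => a * c)%g (ev y)) (ev x).
Proof.
elim: x => [|[w|k] x IH] /=; first by case: (ev y) => //= c; rewrite mul1g.
  by rewrite IH; case: (ev x) => //= c; case: (ev y) => //= d; rewrite mulgA.
by [].
Qed.

Lemma Lf0 (f : lc) : Lf (fun _ => 0) f = 0.
Proof. by rewrite /Lf big1 // => p _; rewrite mulr0. Qed.

Lemma rel_Lf0 (K : option gT -> C) r : K None = 0 -> rel r ->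
  Lf (fun x => K (ev x)) r = 0.
Proof.
move=> KN.
case=> [->|[[w1 [w2 ->]]|[[i [s [_ [->|->]]]]|[[i [w [_ [_ [->|->]]]]]|[[i ->]|
  [[w [i [j [_ ->]]]]|[[i [j [_ ->]]]|[[i [j [_ [->|->]]]]|[i [j [_ ->]]]]]]]]]]];
  rewrite /lc_sub /lc_scale /lc_mul /genT /gene /lc_word /= /Lf /=
    ?big_cons ?big_nil /= ?KN ?mulr0 ?add0r ?addr0 ?subrr //.
- by rewrite mulg1 mulr1 mul1r mulN1r subrr.
- by rewrite !mulg1 !mulr1 mul1r mulN1r subrr.
- rewrite big1_seq // => q /andP[_ /mapP[p /flattenP[s /mapP[p' _ ->]]]].
  rewrite inE => /eqP -> -> /=; rewrite ev_cat.
  by case: (ev p'.2) => //=; rewrite KN mulr0.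
- rewrite big1_seq // => q /andP[_ /mapP[p]]; rewrite cats0 => /mapP[p' _ -> ->] /=.
  by rewrite KN mulr0.
Qed.

Lemma T_inj (a : gT -> C) : B_ideal rho H Rs mu tau (T_image P a) -> forall w, a w = 0.
Proof.
move=> /in_idealI [l e] g.
pose K (o : option gT) : C := (o == Some g)%:R.
have := e (fun x => K (ev x)).
rewrite big1; last first.
  move=> t _; rewrite /tval Lf_sand.
  pose Kt o := K (obind (fun c => omap (fun d => c * d)%g
               (obind (fun c => omap (fun d => c * d)%g (ev t.1.2)) o)) (ev t.1.1.2)).
  have h := @rel_Lf0 Kt (sval t.2).
  rewrite (Lf_ext _ (G := fun x => Kt (ev x))); last by move=> x; rewrite /Kt !ev_cat.
  rewrite h ?mulr0 //; last by case: (t.2).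
  by rewrite /Kt; case: (ev t.1.1.2).
rewrite /Lf /T_image big_map (bigD1_seq g) ?mem_enum ?enum_uniq //=.
rewrite mulg1 /K eqxx mulr1 big1_seq ?addr0 // => w /andP[wg _] /=.
by rewrite mulg1 (_ : (Some w == Some g) = false) ?mulr0 //; apply/eqP => -[] /eqP; rewrite (negPf wg).
Qed.

Hypothesis Rs_def : forall g : gT, g \in Rs <-> pseudo_refl (rho g).
Hypothesis H_refl : forall i : P, exists2 s, s \in Rs & (H i == fixsp (rho s))%MS.
Hypothesis H_all : forall s, s \in Rs -> exists i : P, (H i == fixsp (rho s))%MS.
Hypothesis H_inj : forall i j : P, (H i == H j)%MS -> i = j.

Lemma rho_conj s w : rho (s ^ w^-1)%g = rho w *m rho s *m invmx (rho w).
Proof.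
rewrite conjgE invgK !repr_mxM ?in_setT // repr_mxV ?in_setT //; exact: mulmxA.
Qed.

Lemma Rs_conj s w : s \in Rs -> (s ^ w^-1)%g \in Rs.
Proof.
move=> /Rs_def sR; apply/Rs_def; rewrite rho_conj.
by apply: pseudo_refl_conj => //; apply: repr_mx_unit; rewrite in_setT.
Qed.

Lemma maps_ex w j : exists i, maps_hyp rho H w j i.
Proof.
have [s sR Hj] := H_refl j.
have [i Hi] := H_all (Rs_conj w sR).
exists i; rewrite /maps_hyp /mx_act.
have uw : rho w \in unitmx by apply: repr_mx_unit; rewrite in_setT.
have e1 := eqmxMr (rho w)^T (eqmxP Hj).
have e2 := eqmxP (fixsp_conj (rho s) uw).
have e3 := eqmxP Hi.
rewrite rho_conj in e3.
apply/eqmxP; exact: (eqmx_trans e1 (eqmx_trans (eqmx_sym e2) (eqmx_sym e3))).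
Qed.

Lemma rankH i : (0 < n)%N /\ \rank (H i) = n.-1.
Proof.
have [s /Rs_def sR Hi] := H_refl i.
by rewrite (eqmx_rank Hi); apply: rank_fixsp.
Qed.

Lemma pitchforkC a b : pitchfork H a b = pitchfork H b a.
Proof.
rewrite /pitchfork /cap2 capmxC eq_sym; congr (_ && _).
by rewrite [[set b; a]]setUC.
Qed.

Lemma noncross m i : m != i -> ~~ pitchfork H m i -> noncrossing2 H (cap2 H m i).
Proof.
move=> mi npf; apply/and3P; split.
- apply/existsP; exists [set m; i].
  rewrite (bigD1 m) ?inE ?eqxx //= (bigD1 i) ?inE ?eqxx ?orbT //=; first last.
    by apply/eqP => e; rewrite e eqxx in mi.
  rewrite big_pred0; last first.
    by move=> k; rewrite !inE; case: (k == m); case: (k == i).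
  by rewrite capmx1; apply/eqmxP; apply: eqmx_refl.
- have [n0 rm] := rankH m; have [_ ri] := rankH i.
  have nsub : (H i <= H m)%MS = false.
    apply/negP => sub; have [_ e] := mxrank_leqif_eq sub.
    move: e; rewrite rm ri eqxx => /esym e.
    by move/eqP: mi; apply; symmetry; apply: H_inj.
  have [le e] := mxrank_leqif_sup (addsmxSl (H m) (H i)).
  move: e; rewrite addsmx_sub submx_refl nsub /= rm => /eqP ne.
  have le2 := rank_leq_col (H m + H i)%MS.
  have ex := mxrank_sum_cap (H m) (H i).
  rewrite /codim2 /cap2; apply/eqP.
  move: le le2 ex ne; rewrite rm ri -subn1.
  move: (\rank (H m + H i)%MS) (\rank (H m :&: H i)%MS) => x y.
  move=> le le2 ex ne; lia.
- apply/negP => /existsP [a /existsP [b /andP [pab eqc]]].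
  move/negP: npf; apply.
  have eS : [set k | (cap2 H m i <= H k)%MS] = [set k | (cap2 H a b <= H k)%MS].
    by apply/setP => k; rewrite !inE (eqmxP eqc).
  move: (pab); rewrite /pitchfork => /andP[ab /eqP eab].
  have mS : m \in [set a; b] by rewrite -eab -eS inE /cap2 capmxSl.
  have iS : i \in [set a; b] by rewrite -eab -eS inE /cap2 capmxSr.
  rewrite mi /= eS eab.
  move: mS iS mi; rewrite !inE => /orP[]/eqP-> /orP[]/eqP->; rewrite ?eqxx //.
  by rewrite setUC.
Qed.

Local Notation word := (lc_word C).

Definition fs (S : {set P}) : seq P := [seq k <- enum P | k \in S].
Definition ew (l : seq P) : seq X := map inr l.
Definition bw (S : {set P}) (w : gT) : seq X := ew (fs S) ++ [:: inl w].
Definition clique (S : {set P}) :=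
  forall a b, a \in S -> b \in S -> a != b -> pitchfork H a b.
Definition good (g : lc) :=
  forall p, p \in g -> exists S w, clique S /\ p.2 = bw S w.
Definition Sp (f : lc) := exists g, good g /\ Eqv f g.

Lemma Sp_Eqv f g : Eqv f g -> Sp g -> Sp f.
Proof. by move=> e [h [gh e2]]; exists h; split => //; apply: Eqv_trans e e2. Qed.

Lemma Sp_ext f g : (forall F, Lf F f = Lf F g) -> Sp g -> Sp f.
Proof. by move=> e; apply: Sp_Eqv; apply: Eqv_ext. Qed.

Lemma Sp_cat f1 f2 : Sp f1 -> Sp f2 -> Sp (f1 ++ f2).
Proof.
move=> [g1 [h1 e1]] [g2 [h2 e2]]; exists (g1 ++ g2); split; last exact: Eqv_cat.
by move=> p; rewrite mem_cat => /orP[/h1|/h2].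
Qed.

Lemma Sp_scale c f : Sp f -> Sp (lc_scale c f).
Proof.
move=> [g [h e]]; exists (lc_scale c g); split; last exact: Eqv_scale.
by move=> p /mapP [q /h [S [w [cS ->]]] ->]; exists S, w.
Qed.

Lemma Sp_nil : Sp [::].
Proof. by exists [::]; split => //; apply: Eqv_refl. Qed.

Lemma Sp_basis S w : clique S -> Sp (word (bw S w)).
Proof.
move=> cS; exists (word (bw S w)); split; last exact: Eqv_refl.
by move=> p; rewrite inE => /eqP ->; exists S, w.
Qed.

Lemma Sp_flatten (T : eqType) (h : T -> lc) (l : seq T) :
  (forall s, s \in l -> Sp (h s)) -> Sp (flatten (map h l)).
Proof.
elim: l => [|s l IH] hl /=; first exact: Sp_nil.
apply: Sp_cat; first by apply: hl; rewrite inE eqxx.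
by apply: IH => t tl; apply: hl; rewrite inE tl orbT.
Qed.

Lemma fs_split S k : exists l1 l2,
  [/\ fs S = l1 ++ (if k \in S then [:: k] else [::]) ++ l2,
      fs (S :\ k) = l1 ++ l2 & fs (k |: S) = l1 ++ k :: l2].
Proof.
rewrite /fs; have ks : k \in enum P by rewrite mem_enum.
move: (enum_uniq P) ks; move: (enum P) => s us ks.
case/splitPr: ks us => A B; rewrite cat_uniq /= => /and4P[_ /norP[kA _] kB _].
exists [seq x <- A | x \in S], [seq x <- B | x \in S]; split.
- by rewrite filter_cat /=; case: (k \in S).
- rewrite filter_cat /= !inE eqxx /=; congr (_ ++ _); apply: eq_in_filter => x xin;
    rewrite !inE; case: eqP => // xk; subst x.
  + by rewrite xin in kA.
  + by rewrite xin in kB.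
- rewrite filter_cat /= !inE eqxx /=; congr (_ ++ _ :: _); apply: eq_in_filter => x xin;
    rewrite !inE; case: eqP => // xk; subst x.
  + by rewrite xin in kA.
  + by rewrite xin in kB.
Qed.

Lemma mem_fs S k : (k \in fs S) = (k \in S).
Proof. by rewrite mem_filter mem_enum andbT. Qed.

Lemma comm l1 m l2 t : (forall k, k \in l2 -> pitchfork H m k) ->
  Eqv (word (ew (l1 ++ m :: l2) ++ t)) (word (ew (l1 ++ l2 ++ [:: m]) ++ t)).
Proof.
elim: l2 l1 => [|k l2 IH] l1 hk; first exact: Eqv_refl.
apply: (@Eqv_trans _ _ _ _ (word (ew ((l1 ++ [:: k]) ++ m :: l2) ++ t))).
  apply: (@Eqv_rel _ _ _ _ _ (ew l1) _ (ew l2 ++ t)).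
    do 6 right; left; exists m, k; split; first by apply: hk; rewrite inE eqxx.
    reflexivity.
  move=> F; rewrite !Lf_word /lc_sub /lc_scale /lc_mul /gene /lc_word /Lf /= !big_cons !big_nil.
  rewrite /ew !map_cat -!catA /= !mulr1 addr0 mulN1r.
  by rewrite mul1r.
rewrite (_ : l1 ++ (k :: l2) ++ [:: m] = (l1 ++ [:: k]) ++ l2 ++ [:: m]); last by rewrite -catA.
by apply: IH => j jl; apply: hk; rewrite inE jl orbT.
Qed.

Lemma stepE S i w : clique S -> Sp (word (ew (fs S) ++ [:: inr i; inl w])).
Proof.
move=> cS.
have [l1 [l2 [e1 e2 e3]]] := fs_split S i.
case iS: (i \in S).
- rewrite iS /= in e1.
  have hk : forall k, k \in l2 -> pitchfork H i k.
    move=> k kl; have : k \in fs (S :\ i) by rewrite e2 mem_cat kl orbT.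
    by rewrite mem_fs !inE => /andP[ki kS]; apply: cS => //; rewrite eq_sym.
  rewrite e1; apply: (Sp_Eqv (@comm l1 i l2 _ hk)).
  apply: (@Sp_Eqv _ (lc_scale (tau i) (word (ew (l1 ++ l2 ++ [:: i]) ++ [:: inl w])))).
    apply: (@Eqv_rel _ _ _ _ _ (ew (l1 ++ l2)) _ [:: inl w]).
      by do 4 right; left; exists i; reflexivity.
    move=> F; rewrite Lf_word Lf_scale Lf_word /lc_sub /lc_scale /lc_mul /gene /lc_word /Lf /=.
    rewrite !big_cons !big_nil /ew !map_cat -!catA /=.
    by rewrite !mulr1 mul1r addr0 mulN1r mulNr.
  apply: Sp_scale; apply: (Sp_Eqv (Eqv_sym (@comm l1 i l2 _ hk))); rewrite -e1.
  exact: Sp_basis.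
case: (pickP (fun k => (k \in S) && ~~ pitchfork H k i)) => [m /andP[mS npf] | hno].
- have mi : m != i by apply/eqP => e; rewrite e iS in mS.
  have [k1 [k2 [f1 f2 f3]]] := fs_split S m.
  rewrite mS /= in f1.
  have hk : forall k, k \in k2 -> pitchfork H m k.
    move=> k kl; have : k \in fs (S :\ m) by rewrite f2 mem_cat kl orbT.
    by rewrite mem_fs !inE => /andP[ki kS]; apply: cS => //; rewrite eq_sym.
  rewrite f1; apply: (Sp_Eqv (@comm k1 m k2 _ hk)).
  set a := ew (k1 ++ k2).
  have ea : ew (k1 ++ k2 ++ [:: m]) ++ [:: inr i; inl w] =
            a ++ [:: inr m; inr i] ++ [:: inl w] by rewrite /a /ew !map_cat -!catA.
  rewrite ea.
  have nc := noncross mi npf.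
  case: (eqVneq (Rij rho H Rs m i) set0) => [R0|Rn0].
  + apply: (Sp_Eqv _ Sp_nil).
    apply: (@Eqv_rel _ _ _ _ _ a _ [:: inl w]).
      by do 8 right; exists m, i; split; [split => //; apply/eqP | reflexivity].
    move=> F; rewrite Lf_word Lf_nil /lc_mul /gene /lc_word /Lf /= !big_cons !big_nil.
    by rewrite /= subr0 !mulr1 mul1r addr0.
  + apply: (@Sp_Eqv _ (flatten [seq lc_scale (mu s) (word (a ++ [:: inl s; inr i] ++ [:: inl w]))
                     | s <- enum (Rij rho H Rs m i)])).
      apply: (@Eqv_rel _ _ _ _ _ a _ [:: inl w]).
        by do 7 right; left; exists m, i; split; [split | left; reflexivity].
      move=> F; rewrite Lf_word Lf_sub /gene Lf_wordl Lf_word Lf_wordr /sumR !Lf_flatten /=.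
      congr (_ - _); apply: eq_bigr => s _.
      by rewrite /Lf !big_cons !big_nil /=.
    apply: Sp_flatten => s; rewrite mem_enum inE => /andP[sR hs].
    apply: Sp_scale.
    apply: (@Sp_Eqv _ (word (a ++ [:: inr m; inl s] ++ [:: inl w]))).
      apply: (@Eqv_rel _ _ _ _ _ a _ [:: inl w]).
        by do 5 right; left; exists s, m, i; split; [exact: hs | reflexivity].
      move=> F; rewrite !Lf_word /lc_sub /lc_scale /lc_mul /gene /genT /lc_word /Lf /=.
      by rewrite !big_cons !big_nil !mulr1 mul1r addr0 mulN1r.
    apply: (@Sp_Eqv _ (word ((a ++ [:: inr m]) ++ [:: inl (s * w)%g] ++ [::]))).
      apply: (@Eqv_rel _ _ _ _ _ (a ++ [:: inr m]) _ [::]).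
        by right; left; exists s, w.
      move=> F; rewrite !Lf_word /lc_sub /lc_scale /lc_mul /gene /genT /lc_word /Lf /=.
      rewrite !big_cons !big_nil !mulr1 mul1r addr0 mulN1r -!catA /=.
      by [].
    have -> : (a ++ [:: inr m]) ++ [:: inl (s * w)%g] ++ [::] =
              ew (k1 ++ k2 ++ [:: m]) ++ [:: inl (s * w)%g]
      by rewrite cats0 /a /ew !map_cat -!catA.
    apply: (Sp_Eqv (Eqv_sym (@comm k1 m k2 _ hk))); rewrite -f1.
    exact: Sp_basis.
- rewrite iS /= in e1.
  have hk : forall k, k \in l2 -> pitchfork H i k.
    move=> k kl; have : k \in fs S by rewrite e1 mem_cat kl orbT.
    rewrite mem_fs => kS; have := hno k; rewrite kS /= => /negbFE.
    by rewrite pitchforkC.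
  have cS' : clique (i |: S).
    move=> x y; rewrite !inE => /orP[/eqP->|xS] /orP[/eqP->|yS] xy.
    + by rewrite eqxx in xy.
    + by have := hno y; rewrite yS /= => /negbFE; rewrite pitchforkC.
    + by have := hno x; rewrite xS /= => /negbFE.
    + exact: cS.
  rewrite e1 (_ : ew (l1 ++ l2) ++ [:: inr i; inl w] = ew (l1 ++ l2 ++ [:: i]) ++ [:: inl w]);
    last by rewrite /ew !map_cat -!catA.
  apply: (Sp_Eqv (Eqv_sym (@comm l1 i l2 _ hk))); rewrite -e3.
  exact: Sp_basis.
Qed.

Lemma stepT S w y : clique S -> Sp (word (bw S w ++ [:: y])).
Proof.
move=> cS; rewrite /bw -catA /=.
case: y => [v|j].
- apply: (@Sp_Eqv _ (word (ew (fs S) ++ [:: inl (w * v)%g] ++ [::]))); last first.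
    by rewrite cats0; apply: Sp_basis.
  apply: (@Eqv_rel _ _ _ _ _ (ew (fs S)) _ [::]); first by right; left; exists w, v.
  move=> F; rewrite !Lf_word /lc_sub /lc_scale /lc_mul /genT /lc_word /Lf /=.
  by rewrite !big_cons !big_nil /= !mulr1 mul1r addr0 mulN1r.
- have [i hi] := maps_ex w j.
  apply: (@Sp_Eqv _ (word (ew (fs S) ++ [:: inr i; inl w] ++ [::]))); last first.
    by rewrite cats0; apply: stepE.
  apply: (@Eqv_rel _ _ _ _ _ (ew (fs S)) _ [::]).
    by do 5 right; left; exists w, i, j; split.
  move=> F; rewrite !Lf_word /lc_sub /lc_scale /lc_mul /genT /gene /lc_word /Lf /=.
  by rewrite !big_cons !big_nil /= !mulr1 mul1r addr0 mulN1r.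
Qed.

Lemma clique0 : clique set0.
Proof. by move=> a b; rewrite inE. Qed.

Lemma fs0 : fs set0 = [::].
Proof. by rewrite /fs (eq_filter (a2 := pred0)) ?filter_pred0 // => x; rewrite inE. Qed.

Lemma Sp_mulr g y : good g -> Sp (lc_mul g (word [:: y])).
Proof.
elim: g => [|p g IH] gg; first exact: Sp_nil.
apply: (@Sp_ext _ (lc_scale p.1 (word (p.2 ++ [:: y])) ++ lc_mul g (word [:: y]))).
  move=> F; rewrite (Lf_cat F (lc_scale p.1 _)) Lf_scale Lf_word !Lf_wordr.
  done.
apply: Sp_cat.
  have [S [w [cS e]]] := gg p (mem_head _ _).
  by apply: Sp_scale; rewrite e; apply: stepT.
by apply: IH => q qg; apply: gg; rewrite inE qg orbT.
Qed.

Lemma Sp_all x : Sp (word x).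
Proof.
elim/last_ind: x => [|x y IH].
  apply: (@Sp_Eqv _ (word (bw set0 1%g))); last exact: (Sp_basis _ clique0).
  rewrite /bw fs0 /=; apply: Eqv_sym.
  apply: (@Eqv_rel _ _ _ _ _ [::] _ [::]); first by left.
  move=> F; rewrite !Lf_word /lc_sub /lc_scale /genT /lc_one /lc_word /Lf /=.
  by rewrite !big_cons !big_nil /= !mulr1 mul1r addr0 mulN1r.
case: IH => g [gg e].
apply: (@Sp_Eqv _ (lc_mul g (word [:: y]))); last exact: Sp_mulr.
apply: (@Eqv_trans _ _ _ _ (lc_mul (word x) (word [:: y]))).
  by apply: Eqv_ext => F; rewrite Lf_wordr !Lf_word cats1.
exact: Eqv_wordr.
Qed.

Lemma bw_inj S1 w1 S2 w2 : bw S1 w1 = bw S2 w2 -> S1 = S2 /\ w1 = w2.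
Proof.
rewrite /bw !cats1 => /rcons_inj [/(inj_map (@inr_inj _ _)) e ew]; split; last by case: ew.
by apply/setP => k; rewrite -!mem_fs e.
Qed.

Lemma findim : B_findim rho H Rs mu tau.
Proof.
pose b (k : 'I_#|{: {set P} * gT}|) := bw (enum_val k).1 (enum_val k).2.
exists #|{: {set P} * gT}|, b => x.
have [g [gg e]] := Sp_all x.
exists (fun k => lc_coef g (b k)).
apply: I_in_ideal; first exact: rel0.
apply: (I_ext _ e) => F; rewrite !Lf_sub; congr (_ - _).
have ub : uniq (map b (enum 'I_#|{: {set P} * gT}|)).
  rewrite map_inj_uniq ?enum_uniq // => k1 k2 /bw_inj [e1 e2].
  by apply: enum_val_inj; rewrite [enum_val k1]surjective_pairing e1 e2 -surjective_pairing.
rewrite (LfS F ub (f := g)); last first.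
  move=> p pg; have [S [w [_ ->]]] := gg p pg; apply/mapP; exists (enum_rank (S, w)); first by rewrite mem_enum.
  by rewrite /b enum_rankK.
by rewrite /Lf !big_map.
Qed.
End Main.

Theorem theorem5p1
  (C : numClosedFieldType) (n : nat) (gT : finGroupType)
  (rho : mx_representation C [set: gT] n)
  (rho_faithful : mx_faithful rho)
  (rho_unitary : forall g : gT, unitary (rho g))
  (Rs : {set gT})
  (Rs_def : forall g : gT, g \in Rs <-> pseudo_refl (rho g))
  (G_gen : <<Rs>>%g = [set: gT])
  (P : finType) (H : P -> 'M[C]_n)
  (H_refl : forall i : P, exists2 s, s \in Rs & (H i == fixsp (rho s))%MS)
  (H_all : forall s, s \in Rs -> exists i : P, (H i == fixsp (rho s))%MS)
  (H_inj : forall i j : P, (H i == H j)%MS -> i = j)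
  (mu : gT -> C) (tau : P -> C)
  (mu_nz : forall s, s \in Rs -> mu s != 0)
  (mu_conj : forall s x, s \in Rs -> mu (s ^ x)%g = mu s)
  (tau_inv : forall i j, hyp_equiv rho H i j -> tau i = tau j) :
  B_findim rho H Rs mu tau
  /\ B_ideal rho H Rs mu tau (lc_sub (genT C P 1%g) (lc_one C (gT + P)%type))
  /\ (forall w1 w2 : gT,
        B_ideal rho H Rs mu tau
          (lc_sub (lc_mul (genT C P w1) (genT C P w2)) (genT C P (w1 * w2)%g)))
  /\ (forall a : gT -> C,
        B_ideal rho H Rs mu tau (T_image P a) -> forall w, a w = 0).
Proof.
split; first exact: (findim mu tau Rs_def H_refl H_all H_inj).
split.
  by apply: I_in_ideal; [exact: rel0 | apply: I_rel; exact: rel0].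
split.
  move=> w1 w2; apply: I_in_ideal; first exact: rel0.
  by apply: I_rel; right; left; exists w1, w2.
exact: T_inj.
Qed.
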